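(* Let $T$ be a hedge of height $H$, let $C\in\mathcal R(P_{H+1})$ and let $A\in\mathcal{PH}(C,T)$. For $i=1,\dots,H+1$ let $C_i:=C[\{H-i+2,\dots,H+1\}]$ be the trailing $i\times i$ principal submatrix of $C$. Then, as multisets, $$\sigma(A)=\bigcup_{i=1}^{H+1}\ell_i(T)\,\sigma(C_i).$$
   Context: Rooted trees, children, leaves: a rooted tree is a tree with a distinguished root; $y$ is a child of adjacent $z$ if the root-to-$y$ path passes through $z$; in a rooted tree with at least two vertices a leaf is a non-root vertex of degree 1, and in $P_1$ the single vertex is root and leaf. A hedge is a rooted tree which is $P_1$ or in which all leaves are at the same distance from the root. The height $\mathrm{h}(u)$ of a vertex is its distance to a nearest leaf; the height of the hedge is the height of the root. $V_i(T)$ is the set of vertices of height $i$, and $\ell_i(T):=|V_{i-1}(T)|-|V_i(T)|$ for $i\ge1$. $P_n$ is the path $1-2-\cdots-n$, viewed as a hedge of height $n-1$ rooted at vertex $1$ (so vertex $j$ has height $n-j$). $\mathcal R(T)$: real matrices indexed by $V(T)$ with $a_{ij}\ne0$ iff $\{i,j\}\in E(T)$ for $i\ne j$, and $a_{ij}a_{ji}>0$ on edges; diagonal arbitrary. $A[U]$ is the principal submatrix on $U$. Multiset union adds multiplicities; $s\Lambda$ multiplies multiplicities by $s$. Path-to-hedge construction: for a hedge $T$ of height $H$ and $C=(c_{ij})\in\mathcal R(P_{H+1})$, for $v\in V(T)$ let $v'=H+1-\mathrm{h}(v)$ be the vertex of $P_{H+1}$ of the same height. $\mathcal{PH}(C,T)$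 is the set of $A=(a_{uv})\in\mathcal R(T)$ such that $a_{vv}=c_{v'v'}$ for every vertex $v$, and for every non-leaf vertex $v$, $\sum_{u\text{ child of }v}a_{vu}a_{uv}=c_{v',v'+1}\,c_{v'+1,v'}$. *)

(* Defs.v *)
From HB Require Import structures.
From mathcomp Require Import all_boot all_order all_algebra.
From mathcomp Require Import complex.
Set Implicit Arguments. Unset Strict Implicit. Unset Printing Implicit Defensive.
Import Order.TTheory GRing.Theory Num.Theory.
Local Open Scope ring_scope.

(* Conventions.
   - A graph on vertex set 'I_n is a boolean relation e : rel 'I_n.
   - Matrices indexed by V(T) = 'I_n are 'M[R]_n.
   - The path P_{H+1} = 1-2-...-(H+1) is represented on 'I_(H.+1) with
     0-based vertices: paper vertex j is ordinal j-1. *)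

Section Graphs.
Variable n : nat.
Implicit Types (e : rel 'I_n) (u v w : 'I_n).

Fixpoint walkb e (d : nat) u w : bool :=
  if d is d'.+1 then [exists x, e u x && walkb e d' x w] else u == w.

Definition distb e u w (d : nat) : bool :=
  walkb e d u w && [forall j : 'I_d, ~~ walkb e j u w].

Definition is_simple_graph e : Prop :=
  (forall u v, e u v = e v u) /\ (forall u, ~~ e u u).

Definition connectedb e : Prop := forall u w, exists d, walkb e d u w.

Definition nedges e : nat := #|[set p : 'I_n * 'I_n | (p.1 < p.2)%N && e p.1 p.2]|.

Definition is_tree e : Prop :=
  (0 < n)%N /\ is_simple_graph e /\ connectedb e /\ nedges e = n.-1.

Definition leafb e (r v : 'I_n) : bool :=
  if n == 1%N then true else (v != r) && (#|[set u | e v u]| == 1%N).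

(* y is a child of the adjacent vertex z: the root-to-y path passes through z,
   i.e. z is adjacent to y and closer to the root by one. *)
Definition childb e (r y z : 'I_n) : bool :=
  e z y && [exists d : 'I_n, distb e r z d && distb e r y d.+1].

Definition heightb e r u (i : nat) : bool :=
  [exists w, leafb e r w && distb e u w i] &&
  [forall w, forall j : 'I_i, leafb e r w ==> ~~ walkb e j u w].

Definition is_hedge e (r : 'I_n) : Prop :=
  is_tree e /\
  (n = 1%N \/
   forall w1 w2 d1 d2, leafb e r w1 -> leafb e r w2 ->
     distb e r w1 d1 -> distb e r w2 d2 -> d1 = d2).

Definition Vset e r (i : nat) : {set 'I_n} := [set u | heightb e r u i].
Definition ell e r (i : nat) : int := (#|Vset e r i.-1|%:Z - #|Vset e r i|%:Z)%R.

Definition inR (R : realDomainType) e (A : 'M[R]_n) : Prop :=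
  (forall i j, i != j -> (A i j != 0) = e i j) /\
  (forall i j, e i j -> 0 < A i j * A j i).
End Graphs.

Definition path_rel (m : nat) : rel 'I_m :=
  fun i j => (i.+1 == j :> nat) || (j.+1 == i :> nat).

(* PH(C,T) for hedge (e, r) of height H and C in R(P_{H+1});
   v' = H+1-h(v) (1-based) is the ordinal H - h(v). *)
Definition inPH (R : realDomainType) n (e : rel 'I_n) (r : 'I_n) (H : nat)
    (C : 'M[R]_(H.+1)) (A : 'M[R]_n) : Prop :=
  inR e A /\
  (forall v k, heightb e r v k ->
     A v v = C (inord (H - k)) (inord (H - k))) /\
  (forall v k, heightb e r v k -> ~~ leafb e r v ->
     \sum_(u | childb e r u v) A v u * A u v =
     C (inord (H - k)) (inord (H - k).+1) * C (inord (H - k).+1) (inord (H - k))).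

(* trailing i x i principal submatrix C[{H-i+2,...,H+1}] (1-based) *)
Definition trailing (R : Type) H (C : 'M[R]_(H.+1)) (i : nat) : 'M[R]_i :=
  \matrix_(a < i, b < i) C (inord (H.+1 - i + a)) (inord (H.+1 - i + b)).

(* multiplicity of lambda (complex) in the spectrum sigma(M) of a real matrix M:
   its algebraic multiplicity, i.e. multiplicity as a root of the
   characteristic polynomial of M viewed over R[i]. *)
Definition spec_mult (R : rcfType) m (M : 'M[R]_m) (lambda : R[i]) : nat :=
  mup lambda (char_poly (map_mx (fun x : R => (x%:C)%C) M)).

(* Main.v *)
Require Import Defs.
From HB Require Import structures.
From mathcomp Require Import all_boot all_order all_algebra.
From mathcomp Require Import complex.
From mathcomp Require Import fraction fingroup perm zify.
Import Order.TTheory GRing.Theory Num.Theory.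

Set Implicit Arguments. Unset Strict Implicit. Unset Printing Implicit Defensive.

Section Walks.
Variable n : nat.
Variable e : rel 'I_n.
Hypothesis esym : forall u v, e u v = e v u.

Lemma walk_cat a b x y z : walkb e a x y -> walkb e b y z -> walkb e (a + b) x z.
Proof.
elim: a x => [|a IH] x /=; first by move=> /eqP ->.
move=> /existsP [w /andP [exw wy]] yz; apply/existsP; exists w.
by rewrite exw (IH _ wy yz).
Qed.

Lemma walk1 x y : e x y -> walkb e 1 x y.
Proof. by move=> exy; apply/existsP; exists y; rewrite exy /=. Qed.

Lemma walk_rev d u w : walkb e d u w -> walkb e d w u.
Proof.
elim: d u => [|d IH] u; first by rewrite /= eq_sym.
move=> /existsP [x /andP [eux xw]].
rewrite -addn1; apply: walk_cat (IH _ xw) _; apply: walk1; by rewrite esym.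
Qed.
End Walks.

Section Tree.
Variable n : nat.
Variable e : rel 'I_n.
Variable r : 'I_n.
Hypothesis Htree : is_tree e.

Lemma esym u v : e u v = e v u.
Proof. by case: Htree => _ [[s _] _]. Qed.
Lemma eirr u : e u u = false.
Proof. by case: Htree => _ [[_ i] _]; apply/negbTE. Qed.
Lemma conn u w : exists d, walkb e d u w.
Proof. by case: Htree => _ [_ [c _]]. Qed.

Definition dep (w : 'I_n) : nat := ex_minn (conn r w).

Lemma dep_walk w : walkb e (dep w) r w.
Proof. by rewrite /dep; case: ex_minnP. Qed.

Lemma dep_min w d : walkb e d r w -> (dep w <= d)%N.
Proof. by rewrite /dep; case: ex_minnP => m _ H /H. Qed.

Lemma distb_dep w d : distb e r w d = (d == dep w).
Proof.
apply/andP/eqP => [[wd /forallP nw]|->].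
  apply/eqP; rewrite eqn_leq dep_min // andbT leqNgt; apply/negP => lt.
  by have := nw (Ordinal lt); rewrite dep_walk.
split; first exact: dep_walk.
apply/forallP => j; apply/negP => /dep_min; by rewrite leqNgt ltn_ord.
Qed.

Lemma dep_edge u v : e u v -> (dep v <= (dep u).+1)%N.
Proof.
move=> euv; rewrite -addn1; apply: dep_min.
apply: walk_cat (dep_walk u) (walk1 euv).
Qed.

Lemma dep0 w : (dep w == 0%N) = (w == r).
Proof.
apply/eqP/eqP => [d0|->]; last by apply/eqP; rewrite -leqn0 dep_min //= eqxx.
by have := dep_walk w; rewrite d0 /= => /eqP.
Qed.

Lemma parent_ex w : w != r -> exists y, e y w && ((dep y).+1 == dep w).
Proof.
move=> wr; have := dep_walk w; have : dep w != 0%N by rewrite dep0.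
case Ed : (dep w) => [//|d] _ /(walk_rev esym) /existsP [x /andP [ewx xr]].
exists x; rewrite esym ewx /=.
have := dep_min (walk_rev esym xr); have := dep_edge ewx; rewrite esym in ewx.
have := dep_edge ewx; rewrite Ed; lia.
Qed.

Definition par (w : 'I_n) : 'I_n :=
  if [pick y | e y w && ((dep y).+1 == dep w)] is Some y then y else w.

Lemma par_spec w : w != r -> e (par w) w /\ (dep (par w)).+1 = dep w.
Proof.
move=> wr; rewrite /par; case: pickP => [y /andP [-> /eqP ->] //|none].
by have [y] := parent_ex wr; rewrite none.
Qed.

Lemma par_r : par r = r.
Proof.
rewrite /par; case: pickP => [y /andP [_ /eqP]|//].
by have := dep0 r; rewrite eqxx => /eqP ->.
Qed.

Lemma par_neq w : w != r -> par w != w.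
Proof. by move=> /par_spec [epw _]; apply/eqP => E; rewrite E eirr in epw. Qed.

Definition phi (x : 'I_n) : 'I_n * 'I_n :=
  if (x < par x)%N then (x, par x) else (par x, x).

Lemma edge_par u v : e u v ->
  (par v = u /\ dep v = (dep u).+1) \/ (par u = v /\ dep u = (dep v).+1).
Proof.
pose S := [set pr : 'I_n * 'I_n | (pr.1 < pr.2)%N && e pr.1 pr.2].
have cS : #|S| = n.-1 by case: Htree => _ [_ [_ ne]].
pose T := phi @: [set~ r].
have key x : ((phi x).1 = x /\ (phi x).2 = par x) \/ ((phi x).1 = par x /\ (phi x).2 = x).
  by rewrite /phi; case: ifP; [left|right].
have TS : T \subset S.
  apply/subsetP => pr /imsetP [x]; rewrite !inE => xr ->.
  have [epx _] := par_spec xr; have nx := par_neq xr.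
  rewrite /phi; case: (ltngtP x (par x)) => [lt|gt|eq] /=.
  - by rewrite lt esym epx.
  - by rewrite gt epx.
  - by move: nx; rewrite -(val_inj eq) eqxx.
have injphi : {in [set~ r] &, injective phi}.
  move=> x y; rewrite !inE => xr yr E.
  have [px dx] := par_spec xr; have [py dy] := par_spec yr.
  case: (key x) => [[a1 a2]|[a1 a2]]; case: (key y) => [[b1 b2]|[b1 b2]];
    rewrite E in a1 a2.
  - by rewrite -a1 b1.
  - have e1 : x = par y by rewrite -a1 b1.
    have e2 : par x = y by rewrite -a2 b2.
    by rewrite -e1 in dy; rewrite e2 in dx; lia.
  - have e1 : par x = y by rewrite -a1 b1.
    have e2 : x = par y by rewrite -a2 b2.
    by rewrite e1 in dx; rewrite -e2 in dy; lia.
  - by rewrite -a2 b2.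
have cT : #|T| = n.-1 by rewrite card_in_imset // cardsC1 card_ord.
have TeqS : T = S by apply/eqP; rewrite eqEcard TS cS cT leqnn.
move=> euv.
have nuv : u != v by apply/eqP => E; rewrite E eirr in euv.
have gen (a b : 'I_n) : (a < b)%N -> e a b -> exists2 x, x != r &
   ((a = x /\ b = par x) \/ (a = par x /\ b = x)).
  move=> ab eab; have : (a, b) \in S by rewrite inE /= ab eab.
  rewrite -TeqS => /imsetP [x]; rewrite !inE => xr E; exists x => //.
  by case: (key x); rewrite -E /= => -[-> ->]; [left|right].
have fin (a b x : 'I_n) : x != r -> ((a = x /\ b = par x) \/ (a = par x /\ b = x)) ->
   (par b = a /\ dep b = (dep a).+1) \/ (par a = b /\ dep a = (dep b).+1).
  move=> xr; have [_ dx] := par_spec xr.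
  by case => -[-> ->]; [right|left].
case: (ltngtP u v) => [lt|gt|eq].
- by have [x xr H] := gen _ _ lt euv; exact: fin xr H.
- rewrite esym in euv; have [x xr H] := gen _ _ gt euv.
  by case: (fin _ _ _ xr H); [right|left].
- by move: nuv; rewrite (val_inj eq) eqxx.
Qed.

End Tree.

Section Hedge.
Variable n : nat.
Variable e : rel 'I_n.
Variable r : 'I_n.
Variable H : nat.
Hypothesis Hhedge : is_hedge e r.
Hypothesis Hroot : heightb e r r H.

Let Htree : is_tree e. Proof. by case: Hhedge. Qed.
Local Notation dep := (dep r Htree).
Local Notation par := (par r Htree).

Lemma leaf_dep w : leafb e r w -> dep w = H.
Proof.
case/andP: Hroot => /existsP [w0 /andP [lw0 dw0]] _.
rewrite (distb_dep r Htree) in dw0.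
case: Hhedge => _ [n1|hh] lw.
  have all_r (x : 'I_n) : x = r.
    by apply: ord_inj; move: (ltn_ord x) (ltn_ord r) n1; lia.
  rewrite (all_r w); rewrite (all_r w0) in dw0.
  by rewrite (eqP dw0).
apply: (hh w w0) => //; rewrite (distb_dep r Htree) //.
Qed.

Lemma child_ex v : ~~ leafb e r v -> exists c, e v c /\ dep c = (dep v).+1.
Proof.
rewrite /leafb; case: eqP => // n1.
have [vr|vr] := eqVneq v r; rewrite ?vr /=.
  have : (0 < #|[set~ r]|)%N by rewrite cardsC1 card_ord; move: n1 (ltn_ord r); lia.
  case/card_gt0P => w; rewrite !inE => wr _.
  have := dep_walk r Htree w; have : dep w != 0%N by rewrite (dep0 r Htree).
  case: (dep w) => [//|d] _ /existsP [x /andP [erx _]].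
  exists x; split => //.
  have := dep_edge r Htree erx; have : dep x != 0%N.
    by rewrite (dep0 r Htree); apply/eqP => E; rewrite E (eirr Htree) in erx.
  have -> : dep r = 0%N by apply/eqP; rewrite (dep0 r Htree).
  lia.
move=> nc.
have [epv dpv] := par_spec Htree vr.
have pin : par v \in [set u | e v u] by rewrite inE (esym Htree).
have : (0 < #|[set u | e v u] :\ par v|)%N.
  move: nc; rewrite (cardsD1 (par v) [set u | e v u]) pin; lia.
case/card_gt0P => c; rewrite !inE => /andP [ncp evc].
exists c; split => //.
case: (edge_par r Htree evc) => [[_ ->] //|[E _]].
by rewrite E eqxx in ncp.
Qed.

Lemma dep_le v : (dep v <= H)%N.
Proof.
rewrite leqNgt; apply/negP => lt.
have chain k : exists w, dep w = (dep v + k)%N.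
  elim: k => [|k [w dw]]; first by exists v; rewrite addn0.
  have nl : ~~ leafb e r w by apply/negP => /leaf_dep; rewrite dw; lia.
  by have [c [_ dc]] := child_ex nl; exists c; rewrite dc dw addnS.
have [w dw] := chain (\max_(x : 'I_n) dep x).+1.
have : (dep w <= \max_(x < n) dep x)%N by apply: (@leq_bigmax _ (fun x : 'I_n => dep x) w).
rewrite dw; lia.
Qed.

Lemma leafE v : leafb e r v = (dep v == H).
Proof.
apply/idP/eqP => [/leaf_dep //|dv]; apply/negPn/negP => /child_ex [c [_ dc]].
by have := dep_le c; rewrite dc dv; lia.
Qed.

Definition hgt v := (H - dep v)%N.

Lemma walk_lb u w j : leafb e r w -> walkb e j u w -> (hgt u <= j)%N.
Proof.
move=> /leaf_dep dw uw; have := dep_min Htree (walk_cat (dep_walk r Htree u) uw).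
by rewrite dw /hgt; lia.
Qed.

Lemma walk_down u : exists2 w, leafb e r w & walkb e (hgt u) u w.
Proof.
rewrite /hgt; move Ek : (H - dep u)%N => k; elim: k u Ek => [|k IH] u Ek.
  by exists u => //=; rewrite leafE eqn_leq dep_le /=; lia.
have nl : ~~ leafb e r u by rewrite leafE; lia.
have [c [euc dc]] := child_ex nl.
have [w lw cw] : exists2 w, leafb e r w & walkb e k c w by apply: IH; rewrite dc; lia.
by exists w => //; apply/existsP; exists c; rewrite euc.
Qed.

Lemma heightbE u i : heightb e r u i = (i == hgt u).
Proof.
apply/idP/eqP => [/andP [/existsP [w /andP [lw /andP [uw _]]] /forallP fa]|->].
  apply/eqP; rewrite eqn_leq (walk_lb lw uw) andbT leqNgt; apply/negP => lt.
  have [w' lw' uw'] := walk_down u.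
  by have := forallP (fa w') (Ordinal lt); rewrite lw' uw'.
have [w lw uw] := walk_down u.
apply/andP; split.
  apply/existsP; exists w; rewrite lw /distb uw /=.
  by apply/forallP => j; apply/negP => /(walk_lb lw); rewrite leqNgt ltn_ord.
apply/forallP => w'; apply/forallP => j; apply/implyP => lw'.
by apply/negP => /(walk_lb lw'); rewrite leqNgt ltn_ord.
Qed.

Lemma dep_iter v m : (m <= dep v)%N -> dep (iter m par v) = (dep v - m)%N.
Proof.
elim: m => [|m IH] lm; first by rewrite subn0.
rewrite iterS; have := IH (ltnW lm) => dI.
have nr : iter m par v != r.
  by rewrite -(dep0 r Htree) dI; lia.
have [_ dp] := par_spec Htree nr; move: dp; rewrite dI; lia.
Qed.

Lemma dep_lt v : (dep v < n)%N.
Proof.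
pose f (k : 'I_(dep v).+1) := iter (dep v - k) par v.
have inj : injective f.
  move=> a b E; apply: ord_inj; have := congr1 dep E.
  rewrite /f !dep_iter; try lia.
  by move: (ltn_ord a) (ltn_ord b); lia.
by have := leq_card f inj; rewrite !card_ord.
Qed.

Lemma childbE u v : childb e r u v = (par u == v) && (hgt v == (hgt u).+1).
Proof.
apply/idP/idP.
  case/andP => evu /existsP [d /andP]; rewrite !(distb_dep r Htree) => -[/eqP dv /eqP du].
  case: (edge_par r Htree evu) => [[-> dd]|[_ dd]]; last by move: dd; rewrite -dv -du; lia.
  by rewrite eqxx /=; have := dep_le u; rewrite /hgt; lia.
case/andP => /eqP pu /eqP hh.
have [ur|ur] := eqVneq u r.
  by move: pu hh; rewrite ur par_r => <-; lia.
have [epu dpu] := par_spec Htree ur.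
rewrite /childb pu in epu *; rewrite epu /=.
apply/existsP; exists (Ordinal (dep_lt v)).
by rewrite !(distb_dep r Htree) /= eqxx -dpu -pu eqxx.
Qed.

Lemma edge_hgt u v : e u v ->
  (par v = u /\ hgt u = (hgt v).+1) \/ (par u = v /\ hgt v = (hgt u).+1).
Proof.
move=> euv; have := dep_le u; have := dep_le v; rewrite /hgt.
by case: (edge_par r Htree euv) => -[-> ->] ? ?; [left|right]; split => //; lia.
Qed.

End Hedge.

Local Open Scope ring_scope.

Lemma det_unit_rows (K : comNzRingType) n (P : pred 'I_n) (Q Q0 : 'M[K]_n) :
  (forall u v, P u -> Q u v = (u == v)%:R) ->
  (forall u v, P u -> Q0 u v = Q u v) ->
  (forall u v, ~~ P v -> Q0 u v = Q u v) ->
  \det Q = \det Q0.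
Proof.
move=> HQ HQ0r HQ0c; rewrite /determinant; apply: eq_bigr => s _; congr (_ * _).
have [Hfix|] := boolP [forall u, P u ==> ((s : 'S_n) u == u)].
  apply: eq_bigr => i _.
  have [Pi|nPi] := boolP (P i); first by rewrite HQ0r.
  rewrite HQ0c //; apply/negP => Psi.
  have := implyP (forallP Hfix (s i)) Psi => /eqP /perm_inj si.
  by move: Psi; rewrite si (negbTE nPi).
rewrite negb_forall => /existsP [u]; rewrite negb_imply => /andP [Pu nsu].
rewrite (bigD1 u) //= [RHS](bigD1 u) //= HQ0r // HQ // eq_sym (negbTE nsu).
by rewrite !mul0r.
Qed.

Section Core.
Variable K : fieldType.
Variables (n : nat) (h : 'I_n -> nat) (p : 'I_n -> 'I_n) (M : 'M[K]_n).
Variables (al be : nat -> K).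
Fixpoint gam k := if k is k'.+1 then al k - be k / gam k' else al 0.
Hypothesis Hd : forall u, M u u = al (h u).
Hypothesis Ho : forall u v, u != v -> M u v != 0 ->
  (p v = u /\ h u = (h v).+1) \/ (p u = v /\ h v = (h u).+1).
Hypothesis Hs : forall v, (0 < h v)%N ->
  \sum_(u | (p u == v) && (h v == (h u).+1)) M v u * M u v = be (h v).
Variable hmax : nat.
Hypothesis Hh : forall u, (h u <= hmax)%N.
Hypothesis Hg : forall k, (k < hmax)%N -> gam k != 0.

Definition Sinv j (Q : 'M[K]_n) :=
  [/\ (forall u v, (h u < j)%N -> Q u v = (u == v)%:R /\ Q v u = (v == u)%:R),
      (forall u, (j <= h u)%N -> Q u u = (if h u == j then gam j else al (h u))) &
      (forall u v, u != v -> (j <= h u)%N -> (j <= h v)%N -> Q u v = M u v)].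

Lemma Mhdiff u v : M u v != 0 -> u != v -> (h u = (h v).+1 \/ h v = (h u).+1).
Proof. by move=> nz neq; case: (Ho neq nz) => [[_ ->]|[_ ->]]; auto. Qed.

Lemma M0 u v : u != v -> h u != (h v).+1 -> h v != (h u).+1 -> M u v = 0.
Proof.
move=> neq n1 n2; apply/eqP; apply/negPn/negP => nz.
by case: (Mhdiff nz neq) => /eqP; rewrite ?(negbTE n1) ?(negbTE n2).
Qed.

Definition Qnext j : 'M[K]_n := \matrix_(u, v)
  if (h u <= j)%N || (h v <= j)%N then (u == v)%:R
  else if u == v then (if h u == j.+1 then gam j.+1 else al (h u)) else M u v.

Lemma Qnext_inv j Q : Sinv j Q -> Sinv j.+1 (Qnext j).
Proof.
move=> _; split.
- by move=> u v huj; rewrite !mxE -ltnS huj /= orbT eq_sym.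
- move=> u hu; rewrite mxE leqNgt hu /= eqxx; case: eqP => // ->.
- move=> u v neq hu hv; rewrite mxE leqNgt hu leqNgt hv /= (negbTE neq) //.
Qed.

Lemma step j Q : (j <= hmax)%N -> Sinv j Q ->
  \det Q = (\prod_(u | h u == j) gam j) * \det (Qnext j).
Proof.
move=> jle [I1 I2 I3]; set t := gam j.
pose E : 'M[K]_n := \matrix_(a, b)
  if (h a == j) && (j < h b)%N then - (Q a b / t) else 0.
pose N : 'M[K]_n := 1%:M + E.
pose Z := Q *m N.
have ZE : forall u v, Z u v = if (h v <= j)%N then Q u v
     else if (h u <= j)%N then 0 else Qnext j u v.
  move=> u v; rewrite /Z /N mulmxDr mulmx1 mxE.
  rewrite [(Q *m E) u v]mxE.
  have [hvj|hvj] := leqP (h v) j.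
    rewrite big1 ?addr0 // => w _; rewrite mxE.
    by rewrite ltnNge hvj andbF mulr0.
  have sumE : \sum_j0 Q u j0 * E j0 v =
      - (\sum_(w | h w == j) Q u w * Q w v) / t.
    rewrite mulNr mulr_suml -sumrN [RHS]big_mkcond /=; apply: eq_bigr => w _.
    rewrite mxE hvj andbT; case: eqP => _; last by rewrite mulr0.
    by rewrite mulrN mulrA.
  rewrite sumE.
  have [huj|huj|huj] := ltngtP (h u) j.
  - rewrite big1 ?oppr0 ?mul0r.
      by have [-> _] := I1 u v huj; rewrite addr0; case: eqP => // eq;
         move: hvj; rewrite -eq ltnNge (ltnW huj).
    move=> w /eqP hw; have [-> _] := I1 u w huj.
    by case: eqP => [eq|]; [move: huj; rewrite eq hw ltnn|rewrite mul0r].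
  - 
    have [uv|uv] := eqVneq u v.
      rewrite -uv in hvj *.
      rewrite I2 ?(ltnW hvj) //.
      have -> : \sum_(w | h w == j) Q u w * Q w u =
                \sum_(w | h w == j) M u w * M w u.
        apply: eq_bigr => w /eqP hw.
        have nuw : u != w by apply/eqP => e; move: huj; rewrite e hw ltnn.
        by rewrite I3 ?hw ?(ltnW huj) // I3 // 1?eq_sym // ?hw ?(ltnW huj).
      rewrite mxE leqNgt huj /= eqxx.
      have [hj1|hj1] := eqVneq (h u) j.+1.
        have -> : (h u == j) = false by rewrite hj1 gtn_eqF.
        rewrite -hj1 -(Hs (v:=u)); last by rewrite hj1.
        rewrite mulNr; congr (_ - _ / _).
        rewrite [RHS]big_mkcond [LHS]big_mkcond /=.
        apply: eq_bigr => w _; rewrite hj1 eqSS.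
        have [pw|pw] := eqVneq (p w) u; first by rewrite /= eq_sym.
        rewrite /=; case: eqP => // hw.
        have [Mz|Mz] := eqVneq (M u w) 0; first by rewrite Mz mul0r.
        have nuw : u != w by apply/eqP => e; move: hj1; rewrite e hw; lia.
        case: (Ho nuw Mz) => [[pwu _]|[_ e]]; first by rewrite pwu eqxx in pw.
        by move: e; rewrite hj1 hw; lia.
      rewrite big1 ?oppr0 ?mul0r ?addr0; last first.
        move=> w /eqP hw; rewrite M0 ?mul0r //.
        - by apply/eqP => e; move: huj; rewrite e hw ltnn.
        - by rewrite hw.
        - by rewrite hw; apply/eqP => e; move: huj; rewrite e ltnNge leqnSn.
      by rewrite ifN //; move: huj; lia.
    rewrite big1 ?oppr0 ?mul0r ?addr0.
      by rewrite I3 ?(ltnW huj) ?(ltnW hvj) // mxE leqNgt huj leqNgt hvj /=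
         (negbTE uv).
    move=> w /eqP hw.
    have [Mz|Mz] := eqVneq (M u w) 0.
      have nuw : u != w by apply/eqP => e; move: huj; rewrite e hw ltnn.
      by rewrite I3 ?hw ?(ltnW huj) // Mz mul0r.
    have nuw : u != w by apply/eqP => e; move: huj; rewrite e hw ltnn.
    have nwv : w != v by apply/eqP => e; move: hvj; rewrite -e hw ltnn.
    rewrite (I3 w v) ?hw ?(ltnW hvj) //.
    have [Mz2|Mz2] := eqVneq (M w v) 0; first by rewrite Mz2 mulr0.
    case: (Ho nuw Mz) => [[pw _]|[_ e]]; last by move: huj; rewrite -hw e ltnNge leqnSn.
    case: (Ho nwv Mz2) => [[_ e]|[pw' _]]; first by move: hvj; rewrite -hw e ltnNge leqnSn.
    by move: uv; rewrite -pw pw' eqxx.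
  - have tn0 : t != 0 by apply: Hg; exact: leq_trans hvj (Hh v).
    rewrite (bigD1 u) /=; last by rewrite huj.
    rewrite big1 ?addr0.
      by rewrite I2 ?huj ?leqnn // eqxx mulNr mulrC mulrA mulVf // mul1r addrN.
    move=> w /andP [/eqP hw nwu].
    have nuw : u != w by rewrite eq_sym.
    by rewrite I3 ?hw ?huj // M0 ?mul0r //; rewrite ?hw ?huj; lia.
have detN : \det N = 1.
  rewrite -(det1 K n); apply: (@det_unit_rows _ _ (fun a => h a != j)).
  - by move=> a b ha; rewrite !mxE (negbTE ha) addr0.
  - by move=> a b ha; rewrite !mxE (negbTE ha) addr0.
  - by move=> a b /negPn /eqP hb; rewrite !mxE hb ltnn andbF addr0.
have detZQ : \det Z = \det Q by rewrite /Z det_mulmx detN mulr1.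
clearbody Z.
pose d : 'rV[K]_n := \row_u (if h u == j then t else 1).
pose Z' : 'M[K]_n := \matrix_(u, v) if (h u <= j)%N then (u == v)%:R else Z u v.
have ZD : Z = diag_mx d *m Z'.
  rewrite mul_diag_mx; apply/matrixP => u v; rewrite !mxE.
  have [huj|huj] := leqP (h u) j; last first.
    by rewrite ifN ?mul1r // neq_ltn huj orbT.
  rewrite ZE; have [hvj|hvj] := leqP (h v) j; last first.
    rewrite huj (_ : (u == v) = false) ?mulr0 //.
    by apply/eqP => e; move: huj hvj; rewrite e; lia.
  have [ltj|gtj|eqj] := ltngtP (h u) j.
  - by have [-> _] := I1 u v ltj; rewrite mul1r.
  - by move: huj; rewrite leqNgt gtj.
  - rewrite ?eqj ?eqxx.
    have [uv|uv] := eqVneq u v.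
      by rewrite -uv mulr1 I2 ?eqj ?eqxx ?leqnn.
    rewrite mulr0.
    have [ltv|gtv|eqv] := ltngtP (h v) j.
    + by have [_ ->] := I1 v u ltv; rewrite (negbTE uv).
    + by move: hvj; rewrite leqNgt gtv.
    + by rewrite I3 ?eqj ?eqv // M0 //; rewrite ?eqj ?eqv; lia.
have detZ' : \det Z' = \det (Qnext j).
  apply: (@det_unit_rows _ _ (fun a => h a <= j)%N).
  - by move=> a b ha; rewrite mxE ha.
  - by move=> a b ha; rewrite !mxE ha.
  - move=> a b; rewrite -ltnNge => hb; rewrite !mxE.
    rewrite [(h b <= j)%N]leqNgt hb orbF; case: (leqP (h a) j) => ha //.
    by rewrite ZE (leqNgt (h b)) hb /= (leqNgt (h a)) ha /= mxE (leqNgt (h a)) ha (leqNgt (h b)) hb.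
move: detZQ; rewrite ZD det_mulmx det_diag detZ' => <-; congr (_ * _).
by rewrite [RHS]big_mkcond; apply: eq_bigr => u _; rewrite mxE.
Qed.

Lemma core_gen m : forall j Q, (hmax < j + m)%N -> Sinv j Q ->
  \det Q = \prod_(u | (j <= h u)%N) gam (h u).
Proof.
elim: m => [|m IH] j Q hj [I1 I2 I3].
  rewrite addn0 in hj.
  have -> : Q = 1%:M.
    apply/matrixP => u v; rewrite mxE.
    by have [-> _] := I1 u v (leq_ltn_trans (Hh u) hj).
  rewrite det1 big_pred0 // => u; apply/negbTE; rewrite -ltnNge.
  exact: leq_ltn_trans (Hh u) hj.
have [jle|jgt] := leqP j hmax; last first.
  have -> : Q = 1%:M.
    by apply/matrixP => u v; rewrite mxE; have [-> _] := I1 u v (leq_ltn_trans (Hh u) jgt).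
  rewrite det1 big_pred0 // => u; apply/negbTE; rewrite -ltnNge.
  exact: leq_ltn_trans (Hh u) _.
rewrite (step jle (And3 I1 I2 I3)).
rewrite (IH j.+1 (Qnext j)); last 2 first.
- by rewrite addSnnS.
- exact: (Qnext_inv (And3 I1 I2 I3)).
rewrite [RHS](bigID (fun u => h u == j)) /=; congr (_ * _).
  apply: eq_big => [u|u /eqP -> //]; rewrite andbC; case: eqP => // ->; by rewrite leqnn.
apply: eq_bigl => u; by rewrite ltn_neqAle eq_sym andbC.
Qed.

Lemma core : \det M = \prod_u gam (h u).
Proof.
rewrite (@core_gen hmax.+1 0 M) ?add0n //.
split => //.
by move=> u _; rewrite Hd; case: eqP => // ->.
Qed.
End Core.

Section Bridge.
Variable F : fieldType.
Local Notation K := {fraction {poly F}}.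
Local Notation tf := (@tofrac {poly F}).
Variables (dg bb : nat -> F).
Definition alF k : K := tf ('X - (dg k)%:P).
Definition beF k : K := tf ((bb k)%:P).
Definition gF := gam alF beF.

Lemma cpmxE m (B : 'M[F]_m) u v :
  char_poly_mx B u v = (if u == v then 'X - (B u u)%:P else - (B u v)%:P).
Proof.
rewrite /char_poly_mx !mxE; case: eqP => [->|_] /=; first by rewrite mulr1n.
by rewrite mulr0n sub0r.
Qed.

Lemma bridge m (B : 'M[F]_m) (h : 'I_m -> nat) (p : 'I_m -> 'I_m) hmax :
  (forall u, B u u = dg (h u)) ->
  (forall u v, u != v -> B u v != 0 ->
     (p v = u /\ h u = (h v).+1) \/ (p u = v /\ h v = (h u).+1)) ->
  (forall v, (0 < h v)%N ->
     \sum_(u | (p u == v) && (h v == (h u).+1)) B v u * B u v = bb (h v)) ->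
  (forall u, (h u <= hmax)%N) ->
  (forall k, (k < hmax)%N -> gF k != 0) ->
  tf (char_poly B) = \prod_u gF (h u).
Proof.
move=> Hd Ho Hs Hh Hg.
rewrite /char_poly -det_map_mx.
apply: (core (h := h) (p := p)) Hh Hg.
- by move=> u; rewrite mxE cpmxE eqxx Hd.
- move=> u v uv; rewrite mxE cpmxE (negbTE uv) => nz; apply: Ho uv _.
  by apply: contra nz => /eqP ->; rewrite rmorph0 oppr0 rmorph0.
- move=> v hv; rewrite /beF -(Hs v hv) rmorph_sum rmorph_sum /=.
  apply: eq_bigr => u /andP [_ hu].
  have uv : u != v by apply/eqP => E; move: hu; rewrite E; lia.
  rewrite [X in X * _]mxE [X in _ * X]mxE !cpmxE (negbTE uv) eq_sym (negbTE uv).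
  by rewrite -rmorphM mulrNN -polyCM.
Qed.
End Bridge.

Section Path.
Variable R : rcfType.
Variable H : nat.
Variable C : 'M[R]_(H.+1).
Hypothesis HC : inR (@path_rel H.+1) C.
Local Notation f := (fun x : R => (x%:C)%C).
Definition ent (x y : nat) : R := C (inord x) (inord y).
Definition dgC k : R[i] := f (ent (H - k) (H - k)).
Definition bbC k : R[i] := f (ent (H - k) (H - k).+1) * f (ent (H - k).+1 (H - k)).
Definition Pc i := char_poly (map_mx f (trailing C i)).
Local Notation g := (gF dgC bbC).

Lemma ent_nz x y : (x <= H)%N -> (y <= H)%N -> x != y -> ent x y != 0 ->
  (y = x.+1 \/ x = y.+1).
Proof.
move=> xH yH xy; rewrite /ent; case: HC => HC1 _.
rewrite HC1; last by apply/eqP => /(congr1 val) /=; rewrite !inordK //; apply/eqP.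
by rewrite /path_rel !inordK //; case/orP => /eqP ->; auto.
Qed.

Lemma path_core k : (k <= H)%N -> (forall j, (j < k)%N -> g j != 0) ->
  tofrac (Pc k.+1) = \prod_(j < k.+1) g j.
Proof.
move=> kH Hg.
have BE (a b : 'I_k.+1) : map_mx f (trailing C k.+1) a b =
    f (ent (H - (k - a)) (H - (k - b))).
  rewrite !mxE /ent; congr (f (C (inord _) (inord _))).
  - by move: (ltn_ord a); lia.
  - by move: (ltn_ord b); lia.
rewrite /Pc (@bridge _ dgC bbC _ _ (fun a : 'I_k.+1 => (k - a)%N)
   (fun a : 'I_k.+1 => inord a.-1) k).
- rewrite (reindex_inj rev_ord_inj) /=; apply: eq_bigr => a _.
  by congr g; rewrite /= subnS; move: (ltn_ord a); lia.
- by move=> u; rewrite BE.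
- move=> a b ab; rewrite BE => nz.
  have ab' : (H - (k - a))%N != (H - (k - b))%N.
    apply: contra ab => /eqP E; apply/eqP/ord_inj.
    by move: E (ltn_ord a) (ltn_ord b); lia.
  have nz' : ent (H - (k - a)) (H - (k - b)) != 0.
    by apply: contra nz => /eqP -> /=; rewrite rmorph0.
  have [E|E] : (H - (k - b) = (H - (k - a)).+1 \/ H - (k - a) = (H - (k - b)).+1)%N.
    by apply: ent_nz ab' nz'; lia.
  +  left; split; last by move: E (ltn_ord a) (ltn_ord b); lia.
    apply: ord_inj; rewrite inordK; last by move: (ltn_ord b); lia.
    by move: E (ltn_ord a) (ltn_ord b); lia.
  + right; split; last by move: E (ltn_ord a) (ltn_ord b); lia.
    apply: ord_inj; rewrite inordK; last by move: (ltn_ord a); lia.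
    by move: E (ltn_ord a) (ltn_ord b); lia.
- move=> v hv.
  have vk : (v.+1 < k.+1)%N by lia.
  rewrite (big_pred1 (inord v.+1)); last first.
    move=> u /=; apply/andP/eqP => [[/eqP pu /eqP hu]|->].
      by apply: ord_inj; rewrite inordK //; move: hu (ltn_ord u); lia.
    rewrite inordK //=; split; last by apply/eqP; lia.
    by apply/eqP/ord_inj; rewrite inordK //; lia.
  rewrite !BE inordK // /bbC; congr (f (ent _ _) * f (ent _ _)); lia.
- by move=> u; lia.
- exact: Hg.
Qed.

Lemma Pc0 : Pc 0 = 1.
Proof. by rewrite /Pc /char_poly det_mx00. Qed.

Lemma Pc_neq0 i : Pc i != 0.
Proof. exact/monic_neq0/char_poly_monic. Qed.

Lemma path_prod i : (i <= H.+1)%N -> tofrac (Pc i) = \prod_(j < i) g j.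
Proof.
elim: i => [|i IH] iH; first by rewrite Pc0 big_ord0 rmorph1.
apply: path_core; first by lia.
move=> j ji; have := IH (ltnW iH).
have : tofrac (Pc i) != 0 by rewrite tofrac_eq0 Pc_neq0.
move=> nz E; rewrite E in nz; move/prodf_neq0: nz => nz.
exact: (nz (Ordinal ji)).
Qed.

Lemma g_neq0 j : (j <= H)%N -> g j != 0.
Proof.
move=> jH; have := path_prod (i := j.+1) jH.
have : tofrac (Pc j.+1) != 0 by rewrite tofrac_eq0 Pc_neq0.
move=> nz E; rewrite E in nz; move/prodf_neq0: nz => nz.
exact: (nz (Ordinal (ltnSn j))).
Qed.

Lemma Pc_step j : (j <= H)%N -> tofrac (Pc j.+1) = tofrac (Pc j) * g j.
Proof.
move=> jH; rewrite !path_prod; try lia.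
by rewrite big_ord_recr.
Qed.
End Path.

Lemma mup_prod_seq (F : fieldType) x (I : Type) (s : seq I) (G : I -> {poly F}) :
  (forall i, G i != 0) -> mup x (\prod_(i <- s) G i) = (\sum_(i <- s) mup x (G i))%N.
Proof.
move=> nz; elim: s => [|a s IH]; first by rewrite !big_nil mupNroot // root1.
rewrite !big_cons mupM ?IH //; try exact: nz.
rewrite prodf_seq_neq0; by elim: (s) => //= b t ->; rewrite andbT nz.
Qed.

Lemma sum_part (n H : nat) (hh : 'I_n -> nat) (G : nat -> nat) :
  (forall u, (hh u <= H)%N) ->
  (\sum_u G (hh u) = \sum_(k < H.+1) #|[set u | hh u == k]| * G k)%N.
Proof.
move=> hH.
rewrite (partition_big (fun u => (inord (hh u) : 'I_H.+1)) predT) //=.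
apply: eq_bigr => k _.
rewrite (eq_bigr (fun _ => G k)); last first.
  by move=> u /eqP <-; rewrite inordK // ltnS.
rewrite sum_nat_const; congr (_ * _); apply: eq_card => u; rewrite !inE /=.
by rewrite unfold_in /= inordK // ltnS.
Qed.


Unset Implicit Arguments.
Theorem mainTheorem3 (R : rcfType) (n : nat) (e : rel 'I_n) (r : 'I_n)
    (H : nat) (C : 'M[R]_(H.+1)) (A : 'M[R]_n) :
  is_hedge e r ->
  heightb e r r H ->
  inR (@path_rel H.+1) C ->
  inPH e r C A ->
  forall lambda : R[i],
    (spec_mult A lambda)%:Z =
    \sum_(1 <= i < H.+2) ell e r i * (spec_mult (trailing C i) lambda)%:Z.
Proof.
move=> Hhe Hro HC [[HA1 HA2] [HAd HAs]] lambda.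
pose hh := hgt H Hhe.
pose pp := par r (Htree_subproof Hhe).
pose f := (fun x : R => (x%:C)%C).
pose g := gF (dgC C) (bbC C).
have hhH u : (hh u <= H)%N by rewrite /hh /hgt; lia.
have Tcore : tofrac (char_poly (map_mx f A)) = \prod_u g (hh u).
  apply: (@bridge _ (dgC C) (bbC C) _ _ hh pp H).
  - move=> u; rewrite mxE (HAd u (hh u)) ?(heightbE Hhe Hro) //.
  - move=> u v uv; rewrite mxE => nz.
    have euv : e u v.
      rewrite -(HA1 u v uv); apply: contra nz => /eqP -> /=; by rewrite /f rmorph0.
    exact: (edge_hgt Hhe Hro euv).
  - move=> v hv.
    have nl : ~~ leafb e r v.
      by rewrite (leafE Hhe Hro); move: hv; rewrite /hh /hgt; lia.
    have hv' : heightb e r v (hh v) by rewrite (heightbE Hhe Hro).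
    have := HAs v (hh v) hv' nl.
    rewrite (eq_bigl _ _ (childbE Hhe Hro ^~ v)) => E.
    rewrite /bbC /ent.
    have -> : \sum_(u | (pp u == v) && (hh v == (hh u).+1))
        map_mx f A v u * map_mx f A u v =
        f (\sum_(u | (pp u == v) && (hh v == (hh u).+1)) A v u * A u v).
      by rewrite /f rmorph_sum /=; apply: eq_bigr => u _; rewrite !mxE rmorphM.
    by rewrite E /f rmorphM.
  - exact: hhH.
  - by move=> k kH; apply: (g_neq0 HC); lia.
have Pid : \prod_u Pc C (hh u).+1 = \prod_u Pc C (hh u) * char_poly (map_mx f A).
  apply/eqP; rewrite -tofrac_eq rmorphM /= !rmorph_prod Tcore -big_split /=.
  by apply/eqP; apply: eq_bigr => u _; rewrite (Pc_step HC).
have nzP : forall i, Pc C i != 0 by move=> i; exact: Pc_neq0.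
have := congr1 (mup lambda) Pid.
rewrite mupM ?prodf_seq_neq0 ?monic_neq0 ?char_poly_monic //; last first.
  by apply/allP => u _; rewrite implyTb.
rewrite !mup_prod_seq // -!(big_mkcond predT) /=.
rewrite (sum_part (fun k => mup lambda (Pc C k.+1)) hhH).
rewrite (sum_part (fun k => mup lambda (Pc C k)) hhH).
set a := fun k => #|[set u | hh u == k]|.
set m := fun k => mup lambda (Pc C k).
set mPA := mup lambda _.
move=> N1.
have VE k : Vset e r k = [set u | hh u == k].
  by apply/setP => u; rewrite !inE (heightbE Hhe Hro) eq_sym.
have a_top : a H.+1 = 0%N.
  apply/eqP; rewrite cards_eq0; apply/eqP/setP => u; rewrite !inE.
  by apply/negbTE; have := hhH u; lia.
have m0 : m 0%N = 0%N by rewrite /m Pc0 mupNroot // root1.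
change (spec_mult A lambda) with mPA.
rewrite big_add1 /=.
have -> : \sum_(0 <= i < H.+1) ell e r i.+1 * (spec_mult (trailing C i.+1) lambda)%:Z =
   \sum_(0 <= i < H.+1) ((a i * m i.+1)%N%:Z - (a i.+1 * m i.+1)%N%:Z).
  apply: eq_bigr => i _; rewrite /ell /= !VE -/(a i) -/(a i.+1).
  by rewrite mulrBl !PoszM.
rewrite sumrB.
have S2 : \sum_(0 <= i < H.+1) (a i.+1 * m i.+1)%N%:Z =
          \sum_(0 <= i < H.+1) (a i * m i)%N%:Z.
  have := @big_nat_recl _ 0 +%R H.+1 0 (fun i => (a i * m i)%N%:Z) (leq0n _).
  rewrite big_nat_recr //= a_top m0 mul0n muln0 addr0 add0r => <-.
  by [].
rewrite S2 !big_mkord.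
apply/eqP; rewrite eq_sym subr_eq; apply/eqP.
have := congr1 (fun x : nat => x%:Z) N1.
rewrite PoszD.
rewrite !(big_morph (fun x : nat => x%:Z) PoszD (erefl 0%:Z)).
by move=> ->; rewrite addrC.
Qed.
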